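(* Let $(p,f)$ be an SCF-RT rationalizable within the class of symmetric RUM-CFs, and let $x,y\in X$. If $(x,y)\in T(R^s\cup R^{srt})$, then every symmetric RUM-CF $(u,g,r)$ rationalizing $(p,f)$ satisfies $u(x)\geq u(y)$. If $(x,y)\in T_P(R^s\cup R^{srt})$, then every such model satisfies $u(x)>u(y)$.
   Context: $X$ is a finite set of options; $C=\{(x,y): x,y\in X,\ x\neq y\}$; $D\subseteq C$ is a fixed non-empty set with $(x,y)\in D\Rightarrow (y,x)\in D$. An SCF $p$ assigns to each $(x,y)\in D$ a number $p(x,y)>0$ with $p(x,y)+p(y,x)=1$. An SCF-RT is a pair $(p,f)$ where $p$ is an SCF and $f$ assigns to each $(x,y)\in D$ a strictly positive density $f(x,y)$ on $\mathbb{R}^+$ with cdf $F(x,y)$. A RUM is a pair $(u,g)$ with $u:X\to\mathbb{R}$ and $g$ assigning to each $(x,y)\in C$ a density $g(x,y)$ on $\mathbb{R}$ (cdf $G(x,y)$) with $\int v\,g(x,y)(v)\,dv=u(x)-u(y)=:v(x,y)$, $g(x,y)(v)=g(y,x)(-v)$ for all $v$, and connected support. A RUM-CF is $(u,g,r)$ with $(u,g)$ a RUM and $r:\mathbb{R}^{++}\to\mathbb{R}^+$ continuous, strictly decreasing where $r(v)>0$, $\lim_{v\to0}r(v)=\infty$, $\lim_{v\to\infty}r(v)=0$; $r^{-1}(t)$ ($t>0$) is the inverse of $r$ restricted to $\{r>0\}$. It rationalizes $(p,f)$ if for all $(x,y)\in D$: $G(x,y)(0)=p(y,x)$ and $\frac{1-G(x,y)(r^{-1}(t))}{1-G(x,y)(0)}=F(x,y)(t)$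 for all $t>0$. It is symmetric if $g(x,y)(v(x,y)+\delta)=g(x,y)(v(x,y)-\delta)$ for all $(x,y)\in C$, $\delta\geq0$. For $(a,b)\in D$ with $p(a,b)>p(b,a)$, $t(a,b)>0$ is defined by $F(a,b)(t(a,b))=p(b,a)/p(a,b)$ (undefined otherwise). Relations on $X$: $(x,y)\in R^s$ iff $x=y$, or $(x,y)\in D$ and $p(x,y)\geq p(y,x)$; $(x,y)\in R^{srt}$ iff $(x,y)\in C\setminus D$ and there is $z\in X$ with $t(x,z)\leq t(y,z)$ or $t(z,x)\geq t(z,y)$ (the compared quantities being defined). For a binary relation $R$, $T(R)$ is its transitive closure and $T_P(R)$ the asymmetric part of $T(R)$ ($(x,y)\in T(R)$, $(y,x)\notin T(R)$). *)

(* Defs.v *)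
From HB Require Import structures.
From mathcomp Require Import all_boot all_order all_algebra.
From mathcomp Require Import all_classical all_reals all_analysis.
From Stdlib Require Import Relations.Relation_Operators.
Set Implicit Arguments. Unset Strict Implicit. Unset Printing Implicit Defensive.
Import Order.TTheory GRing.Theory Num.Theory.
Import numFieldNormedType.Exports.
Local Open Scope classical_set_scope.
Local Open Scope ring_scope.

Section Defs.
Context {R : realType} {X : finType}.
Local Notation mu := (@lebesgue_measure R).

Definition nonnegR : set R := `[0, +oo[.
Definition posR : set R := `]0, +oo[.

Definition is_domain (D : X -> X -> Prop) : Prop :=
  (exists x y, D x y) /\ (forall x y, D x y -> x <> y) /\ (forall x y, D x y -> D y x).

(* SCF: defined on D (values outside D are irrelevant) *)
Definition is_SCF (D : X -> X -> Prop) (p : X -> X -> R) : Prop :=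
  forall x y, D x y -> 0 < p x y /\ p x y + p y x = 1.

Definition is_pos_density (h : R -> R) : Prop :=
  measurable_fun nonnegR h /\ (forall t, 0 <= t -> 0 < h t) /\
  (\int[mu]_(t in nonnegR) (h t)%:E = 1)%E.

Definition cdf_pos (h : R -> R) (t : R) : R :=
  fine (\int[mu]_(s in (`[0%R, t]%classic : set R)) (h s)%:E)%E.

Definition is_SCF_RT (D : X -> X -> Prop) (p : X -> X -> R) (f : X -> X -> R -> R) : Prop :=
  is_SCF D p /\ forall x y, D x y -> is_pos_density (f x y).

Definition is_density (h : R -> R) : Prop :=
  measurable_fun setT h /\ (forall v, 0 <= h v) /\ (\int[mu]_v (h v)%:E = 1)%E.

Definition cdf (h : R -> R) (v : R) : R :=
  fine (\int[mu]_(w in (`]-oo, v]%classic : set R)) (h w)%:E)%E.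

Definition support (h : R -> R) : set R := closure [set v | h v != 0].

Definition is_RUM (u : X -> R) (g : X -> X -> R -> R) : Prop :=
  forall x y, x <> y ->
    [/\ is_density (g x y),
        mu.-integrable setT (fun v => (v * g x y v)%:E),
        (\int[mu]_v (v * g x y v)%:E = (u x - u y)%:E)%E,
        (forall v, g x y v = g y x (- v)) &
        connected (support (g x y))].

(* the function r of a RUM-CF; only its values on R^{++} matter *)
Definition is_CF (r : R -> R) : Prop :=
  [/\ (forall v, 0 < v -> 0 <= r v),
      {in posR, continuous r},
      (forall a b, 0 < a -> a < b -> 0 < r a -> 0 < r b -> r b < r a),
      r x @[x --> 0^'+] --> +oo &
      r x @[x --> +oo] --> 0].

Definition r_inv (r : R -> R) (t : R) : R :=
  xget 0 [set v | 0 < v /\ 0 < r v /\ r v = t].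

Definition is_RUM_CF (u : X -> R) (g : X -> X -> R -> R) (r : R -> R) : Prop :=
  is_RUM u g /\ is_CF r.

Definition rationalizes (u : X -> R) (g : X -> X -> R -> R) (r : R -> R)
    (D : X -> X -> Prop) (p : X -> X -> R) (f : X -> X -> R -> R) : Prop :=
  forall x y, D x y ->
    cdf (g x y) 0 = p y x /\
    forall t, 0 < t ->
      (1 - cdf (g x y) (r_inv r t)) / (1 - cdf (g x y) 0) = cdf_pos (f x y) t.

Definition is_symmetric (u : X -> R) (g : X -> X -> R -> R) : Prop :=
  forall x y, x <> y -> forall d, 0 <= d ->
    g x y (u x - u y + d) = g x y (u x - u y - d).

Definition sym_rationalizable (D : X -> X -> Prop) (p : X -> X -> R)
    (f : X -> X -> R -> R) : Prop :=
  exists u g r, is_RUM_CF u g r /\ is_symmetric u g /\ rationalizes u g r D p f.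

(* is_t a b s : t(a,b) is defined and equals s *)
Definition is_t (D : X -> X -> Prop) (p : X -> X -> R) (f : X -> X -> R -> R)
    (a b : X) (s : R) : Prop :=
  [/\ D a b, p b a < p a b, 0 < s & cdf_pos (f a b) s = p b a / p a b].

Definition Rs (D : X -> X -> Prop) (p : X -> X -> R) (x y : X) : Prop :=
  x = y \/ (D x y /\ p y x <= p x y).

Definition Rsrt (D : X -> X -> Prop) (p : X -> X -> R) (f : X -> X -> R -> R)
    (x y : X) : Prop :=
  x <> y /\ ~ D x y /\
  exists z, (exists s1 s2, [/\ is_t D p f x z s1, is_t D p f y z s2 & s1 <= s2])
         \/ (exists s1 s2, [/\ is_t D p f z x s1, is_t D p f z y s2 & s2 <= s1]).

Definition TR (Q : X -> X -> Prop) : X -> X -> Prop := clos_trans X Q.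
Definition TPR (Q : X -> X -> Prop) (x y : X) : Prop := TR Q x y /\ ~ TR Q y x.

Definition RsRsrt D p f : X -> X -> Prop := fun a b => Rs D p a b \/ Rsrt D p f a b.

End Defs.

(* Main.v *)
Require Import Defs.
From HB Require Import structures.
From mathcomp Require Import all_boot all_order all_algebra.
From mathcomp Require Import all_classical all_reals all_analysis.
From mathcomp Require Import ring lra.
From mathcomp Require Import measurable_realfun.
From Stdlib Require Import Relations.Relation_Operators.
Import Order.TTheory GRing.Theory Num.Theory.
Import numFieldNormedType.Exports.
Local Open Scope classical_set_scope.
Local Open Scope ring_scope.

Lemma refl_meas (R : realType) (k : R) (A : set R) : measurable A ->
  pushforward (@lebesgue_measure R) (fun x : R => k - x : measurableTypeR R) A = lebesgue_measure A.
Proof.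
move=> mA. apply/esym. apply: lebesgue_measure_unique => //.
  by apply: measurable_realfun.measurable_funB => //; exact: measurable_cst.
move=> ? _ [[a b]] _ <-.
rewrite /=. change (lebesgue_measure `]a,b]%classic = lebesgue_measure ((fun x : R => k - x) @^-1` `]a,b]%classic)).
have -> : (fun x : R => k - x) @^-1` `]a, b]%classic = `[k - b, k - a[%classic.
  apply/seteqP; split => x /=; rewrite !in_itv /=.
  - by move=> /andP[h1 h2]; rewrite lerBlDr -lerBlDl h2 /= ltrBrDl -ltrBrDr.
  - by move=> /andP[h1 h2]; rewrite ltrBrDl -ltrBrDr h2 /= lerBlDr -lerBlDl.
rewrite !lebesgue_measure_itv/= !lte_fin.
rewrite ltrD2l ltrN2; case: ifP => // _; rewrite -!EFinD; congr EFin.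
by ring.
Qed.

Lemma refl_integral (R : realType) (k : R) (A : set R) (h : R -> \bar R) :
  measurable A -> measurable_fun setT h -> (forall x, (0 <= h x)%E) ->
  (\int[@lebesgue_measure R]_(x in A) h x =
   \int[@lebesgue_measure R]_(x in (fun x => k - x)%R @^-1` A) h (k - x)%R)%E.
Proof.
move=> mA mh h0.
have mphi : measurable_fun (setT : set (measurableTypeR R)) (fun x : measurableTypeR R => (k - x : measurableTypeR R)).
  by apply: measurable_realfun.measurable_funB => //; exact: measurable_cst.
have E := ge0_integral_pushforward mphi (@lebesgue_measure R) (f := h) mA (measurable_funS measurableT (subsetT _) mh) (fun y _ => h0 y).
rewrite /comp /= in E; etransitivity; last exact: E.
by apply: eq_measure_integral => //= B mB _; rewrite refl_meas.
Qed.

Lemma efin_sum1 (R : realType) (a b : \bar R) : (0 <= a)%E -> (0 <= b)%E -> (a + b = 1%:E)%E ->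
  a = (fine a)%:E /\ b = (fine b)%:E /\ fine a + fine b = 1.
Proof.
case: a => [x||]; case: b => [y||] //= _ _ [] ->; split => //.
Qed.

Lemma sym_cdf (R : realType) (h : R -> R) (c e : R) :
  is_density h -> (forall d, 0 <= d -> h (c + d) = h (c - d)) ->
  Defs.cdf h (c - e) + Defs.cdf h (c + e) = 1.
Proof.
move=> [mh [h0 h1]] hs.
have hr x : h (c + c - x) = h x.
  case: (leP 0 (c - x)) => H.
    have -> : c + c - x = c + (c - x) by ring.
    by rewrite hs //; congr h; ring.
  have H' : 0 <= x - c by lra.
  have := hs _ H'; have -> : c + (x - c) = x by ring.
  by have -> : c - (x - c) = c + c - x by ring.
have mhE : measurable_fun setT (fun x => (h x)%:E) by exact/measurable_EFinP.
have hE0 : forall x, (0 <= (h x)%:E)%E by move=> x; rewrite lee_fin.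
have E1 : (\int[@lebesgue_measure R]_(x in `]-oo, (c - e)%R]) (h x)%:E =
           \int[@lebesgue_measure R]_(x in `[(c + e)%R, +oo[) (h x)%:E)%E.
  rewrite (@refl_integral _ (c + c)%R) //.
  have -> : (fun x => c + c - x)%R @^-1` `]-oo, (c - e)%R]%classic = `[(c + e)%R, +oo[%classic.
    apply/seteqP; split => x /=; rewrite !in_itv /= andbT => H; lra.
  by apply: eq_integral => x _; rewrite hr.
have E2 : (\int[@lebesgue_measure R]_(x in `[(c + e)%R, +oo[) (h x)%:E =
           \int[@lebesgue_measure R]_(x in `](c + e)%R, +oo[) (h x)%:E)%E.
  rewrite (ge0_negligible_integral (mu := @lebesgue_measure R) (N := [set (c + e)%R])) //.
  - congr (integral _ _ _); apply/seteqP; split => x /=; rewrite !in_itv /= !andbT.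
      by move=> [H1 H2]; rewrite lt_neqAle H1 andbT; apply/eqP => H3; apply: H2; rewrite H3.
    by move=> H; split; [exact: ltW | move=> H2; rewrite H2 ltxx in H].
  - exact: measurable_funS mhE.
  - exact: lebesgue_measure_set1.
have E3 : (\int[@lebesgue_measure R]_(x in `]-oo, (c + e)%R]) (h x)%:E +
           \int[@lebesgue_measure R]_(x in `](c + e)%R, +oo[) (h x)%:E = 1%:E)%E.
  rewrite -ge0_integral_setU //.
  - rewrite -h1; congr (integral _ _ _); apply/seteqP; split => x //= _.
    rewrite /= !in_itv /= andbT; case: (leP x (c + e)) => H; [left|right] => //.
  - exact: measurable_funS mhE.
  - rewrite disj_set2E; apply/eqP/seteqP; split => x //=; rewrite !in_itv /= andbT.
    by move=> [H1 H2]; have := lt_le_trans H2 H1; rewrite ltxx.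
have P1 : (0 <= \int[@lebesgue_measure R]_(x in `]-oo, (c + e)%R]) (h x)%:E)%E.
  by apply: integral_ge0 => x _; exact: hE0.
have P2 : (0 <= \int[@lebesgue_measure R]_(x in `](c + e)%R, +oo[) (h x)%:E)%E.
  by apply: integral_ge0 => x _; exact: hE0.
have [_ [_ S]] := @efin_sum1 R _ _ P1 P2 E3.
by rewrite /Defs.cdf E1 E2 addrC.
Qed.

Lemma cdf_mono (R : realType) (h : R -> R) (s t : R) :
  is_density h -> s <= t -> Defs.cdf h s <= Defs.cdf h t.
Proof.
move=> [mh [h0 h1]] st.
have mhE : measurable_fun setT (fun x => (h x)%:E) by exact/measurable_EFinP.
have hE0 : forall x, (0 <= (h x)%:E)%E by move=> x; rewrite lee_fin.
have Hst : (\int[@lebesgue_measure R]_(x in `]-oo, s]) (h x)%:E <=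
            \int[@lebesgue_measure R]_(x in `]-oo, t]) (h x)%:E)%E.
  apply: ge0_subset_integral => //.
  - exact: measurable_funS mhE.
  - by move=> x /=; rewrite !in_itv /= => H; exact: le_trans st.
have Ht1 : (\int[@lebesgue_measure R]_(x in `]-oo, t]) (h x)%:E <= 1)%E.
  rewrite -h1; apply: ge0_subset_integral => //.
have P1 : (0 <= \int[@lebesgue_measure R]_(x in `]-oo, s]) (h x)%:E)%E.
  by apply: integral_ge0 => x _; exact: hE0.
rewrite /Defs.cdf.
move: P1 Hst Ht1.
by case: (\int[_]_(x in _) _)%E => [a||]; case: (\int[_]_(x in _) _)%E => [b||] //=; rewrite !lee_fin.
Qed.

Lemma int_pos (R : realType) (f : R -> R) (A : set R) :
  measurable A -> measurable_fun A f -> (forall x, A x -> 0 < f x) ->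
  (0 < @lebesgue_measure R A)%E ->
  (0 < \int[@lebesgue_measure R]_(x in A) (f x)%:E)%E.
Proof.
move=> mA mf fp muA.
have mfE : measurable_fun A (fun x => (f x)%:E) by exact/measurable_EFinP.
rewrite lt_neqAle integral_ge0 ?andbT; last by move=> x Ax; rewrite lee_fin ltW // fp.
apply/eqP => H0.
have : (\int[@lebesgue_measure R]_(x in A) `|(f x)%:E| = 0)%E.
  rewrite [RHS]H0; apply: eq_integral => x /[!inE] Ax.
  by rewrite gee0_abs // lee_fin ltW // fp.
move/(ae_eq_integral_abs (@lebesgue_measure R) mA mfE) => [N [mN N0 sN]].
have AN : A `<=` N.
  move=> x Ax; apply: sN => /= H; have := fp x Ax; rewrite /cst in H.
  by move: (H Ax) => [->]; rewrite ltxx.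
have := le_measure (@lebesgue_measure R) (mem_set mA) (mem_set mN) AN.
move=> H; move: muA; rewrite lt_neqAle => /andP[+ _]; move=> /eqP; apply. have N0p : (lebesgue_measure N <= 0)%E by rewrite N0. apply/esym/eqP; rewrite eq_le (le_trans H N0p) /=; exact: measure_ge0.
Qed.

Lemma efin_split (R : realType) (a b c : \bar R) : (0 <= a)%E -> (0 < b)%E -> (a + b = c)%E ->
  (c <= 1)%E -> fine a < fine c /\ fine c <= 1.
Proof.
case: a => [x||]; case: b => [y||]; case: c => [z||] //=; rewrite ?lee_fin ?lte_fin.
move=> x0 y0 [<-] H; split => //; lra.
Qed.

Lemma F_props (R : realType) (f : R -> R) : is_pos_density f ->
  (forall s t, 0 <= s -> s < t -> cdf_pos f s < cdf_pos f t) /\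
  (forall t, 0 <= t -> cdf_pos f t < 1).
Proof.
move=> [mf [fp f1]].
have mfE : measurable_fun nonnegR (fun x => (f x)%:E) by exact/measurable_EFinP.
have fE0 : forall x, nonnegR x -> (0 <= (f x)%:E)%E.
  by move=> x; rewrite /nonnegR /= in_itv /= andbT => H; rewrite lee_fin ltW // fp.
split.
- move=> s t s0 st.
  have U : `[0, t]%classic = `[0, s]%classic `|` `]s, t]%classic :> set R.
    apply/seteqP; split => x /=; rewrite !in_itv /=.
      move=> /andP[H1 H2]; case: (leP x s) => H; [left|right]; apply/andP; split => //.
    case => /andP[H1 H2]; apply/andP; split => //.
      exact: le_trans H2 (ltW st).
    exact: le_trans s0 (ltW H1).
  have sub : `[0, t]%classic `<=` nonnegR.
    by move=> x /=; rewrite /nonnegR /= !in_itv /= andbT => /andP[].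
  have sub1 : `[0, s]%classic `<=` nonnegR.
    by move=> x /=; rewrite /nonnegR /= !in_itv /= andbT => /andP[].
  have sub2 : `]s, t]%classic `<=` nonnegR.
    move=> x /=; rewrite /nonnegR /= !in_itv /= andbT => /andP[H1 _].
    exact: le_trans s0 (ltW H1).
  have P1 : (0 <= \int[@lebesgue_measure R]_(x in `[0%R, s%R]) (f x)%:E)%E.
    apply: integral_ge0 => x Hx; apply: fE0; exact: sub1.
  have P2 : (0 < \int[@lebesgue_measure R]_(x in `]s%R, t%R]) (f x)%:E)%E.
    apply: int_pos => //.
    * exact: (measurable_funS (measurable_itv _) sub2 mf).
    * by move=> x Hx; apply: fp; have := sub2 x Hx; rewrite /nonnegR /= in_itv /= andbT.
    * by rewrite lebesgue_measure_itv /= lte_fin st -EFinD lte_fin subr_gt0.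
  have P3 : (\int[@lebesgue_measure R]_(x in `[0%R, s%R]) (f x)%:E +
             \int[@lebesgue_measure R]_(x in `]s%R, t%R]) (f x)%:E =
             \int[@lebesgue_measure R]_(x in `[0%R, t%R]) (f x)%:E)%E.
    rewrite U ge0_integral_setU //.
    * by rewrite -U; exact: (measurable_funS (measurable_itv _) sub mfE).
    * by move=> x Hx; apply: fE0; apply: sub; rewrite U.
    * rewrite disj_set2E; apply/eqP/seteqP; split => x //=; rewrite !in_itv /=.
      by move=> [/andP[_ H1] /andP[H2 _]]; have := le_lt_trans H1 H2; rewrite ltxx.
  have P4 : (\int[@lebesgue_measure R]_(x in `[0%R, t%R]) (f x)%:E <= 1)%E.
    by rewrite -f1; apply: ge0_subset_integral => //; exact: measurable_itv.
  by have [] := @efin_split R _ _ _ P1 P2 P3 P4.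
- move=> t t0.
  have U : nonnegR = `[0, t]%classic `|` `]t, +oo[%classic :> set R.
    apply/seteqP; split => x /=; rewrite /nonnegR /= !in_itv /= ?andbT.
      move=> H1; case: (leP x t) => H; [left|right] => //; apply/andP; split => //.
    by case => [/andP[]//|H]; apply: le_trans (ltW H).
  have P1 : (0 <= \int[@lebesgue_measure R]_(x in `[0%R, t%R]) (f x)%:E)%E.
    apply: integral_ge0 => x Hx; apply: fE0; by move: Hx; rewrite /nonnegR /= !in_itv /= andbT => /andP[].
  have P2 : (0 < \int[@lebesgue_measure R]_(x in `]t%R, +oo[) (f x)%:E)%E.
    apply: int_pos => //.
    * apply: (measurable_funS (measurable_itv _) _ mf) => y; rewrite /nonnegR /= !in_itv /= !andbT => H1; exact: le_trans t0 (ltW H1).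
    * move=> x /=; rewrite in_itv /= andbT => H1; apply: fp; exact: le_trans t0 (ltW H1).
    * by rewrite lebesgue_measure_itv /= ltry addye.
  have P3 : (\int[@lebesgue_measure R]_(x in `[0%R, t%R]) (f x)%:E +
             \int[@lebesgue_measure R]_(x in `]t%R, +oo[) (f x)%:E =
             \int[@lebesgue_measure R]_(x in nonnegR) (f x)%:E)%E.
    rewrite U ge0_integral_setU //.
    * by rewrite -U.
    * by move=> x Hx; apply: fE0; rewrite U.
    * rewrite disj_set2E; apply/eqP/seteqP; split => x //=; rewrite !in_itv /= andbT.
      by move=> [/andP[_ H1] H2]; have := le_lt_trans H1 H2; rewrite ltxx.
  have P4 : (\int[@lebesgue_measure R]_(x in nonnegR) (f x)%:E <= 1)%E by rewrite f1.
  have [H _] := @efin_split R _ _ _ P1 P2 P3 P4.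
  by move: H; rewrite f1.
Qed.

Lemma near0P (R: realType) (P : R -> Prop) : (\forall x \near 0^'+, P x) ->
  exists2 e : R, 0 < e & forall x, 0 < x -> x < e -> P x.
Proof.
move=> /nbhs_ballP[e /= e0 He]; exists e => // x x0 xe; apply: He => //.
by rewrite /ball /= sub0r normrN gtr0_norm.
Qed.

Arguments near0P {R P}.

Lemma contpos (R : realType) (r : R -> R) (w : R) : {in posR, continuous r} -> 0 < w -> 0 < r w ->
  exists2 e : R, 0 < e & forall v, `|w - v| < e -> 0 < r v.
Proof.
move=> rc w0 rw0.
have wp : w \in posR by rewrite inE /posR /= in_itv /= andbT.
have := cvgr_gt (r w) (rc w wp) 0 rw0.
move=> /(_ (nbhs_filter w)) /nbhs_ballP[e /= e0 He]; exists e => // v wv; exact: He.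
Qed.

Arguments contpos {R r w}.

Definition Model (R : realType) (X : finType) (D : X -> X -> Prop) (p : X -> X -> R)
  (f : X -> X -> R -> R) (u : X -> R) (g : X -> X -> R -> R) (r : R -> R) : Prop :=
  [/\ is_domain D, is_SCF_RT D p f, is_RUM u g, is_CF r & is_symmetric u g /\ rationalizes u g r D p f].

Arguments Model {R X}.
Arguments F_props {R f}.
Arguments sym_cdf {R h c e}.
Arguments cdf_mono {R h s t}.

Lemma m_surj (R : realType) (X : finType) (D : X -> X -> Prop) (p : X -> X -> R) (f : X -> X -> R -> R) (u : X -> R) (g : X -> X -> R -> R) (r : R -> R) (a b : X) (t : R) :
  Model D p f u g r -> D a b -> 0 < t -> exists v, 0 < v /\ 0 < r v /\ r v = t.
Proof.
move=> [dom [scf fd] rum cf [sym rat]] Dab t0.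
case: (pselect (exists v, 0 < v /\ 0 < r v /\ r v = t)) => // nex.
have rinv0 : r_inv r t = 0.
  apply: xgetPN => v Pv; apply: nex; exists v; exact: Pv.
have [G0 HF] := rat a b Dab.
have := HF t t0; rewrite rinv0 G0.
have [pab1 pab2] := scf a b Dab.
have -> : 1 - p b a = p a b by lra.
rewrite divff ?gt_eqF // => F1.
have [_ Flt] := F_props (fd a b Dab).
by have := Flt t (ltW t0); rewrite -F1 ltxx.
Qed.
Arguments m_surj {R X D p f u g r a b t}.

Lemma m_rinv (R : realType) (X : finType) (D : X -> X -> Prop) (p : X -> X -> R) (f : X -> X -> R -> R) (u : X -> R) (g : X -> X -> R -> R) (r : R -> R) (v : R) :
  Model D p f u g r -> 0 < v -> 0 < r v -> r_inv r (r v) = v.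
Proof.
move=> [_ _ _ [_ _ dec _ _] _] v0 rv0.
apply: xget_unique; first by split.
move=> y [y0 [ry0 ryv]]; case: (ltgtP y v) => // H.
- by have := dec _ _ y0 H ry0 rv0; rewrite ryv ltxx.
- by have := dec _ _ v0 H rv0 ry0; rewrite ryv ltxx.
Qed.
Arguments m_rinv {R X D p f u g r v}.

Lemma m_K3 (R : realType) (X : finType) (D : X -> X -> Prop) (p : X -> X -> R) (f : X -> X -> R -> R) (u : X -> R) (g : X -> X -> R -> R) (r : R -> R) (a b : X) (v : R) :
  Model D p f u g r -> D a b -> 0 < v -> 0 < r v ->
  1 - Defs.cdf (g a b) v = p a b * cdf_pos (f a b) (r v).
Proof.
move=> M Dab v0 rv0.
have [dom [scf fd] rum cf [sym rat]] := M.
have [G0 HF] := rat a b Dab.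
have := HF (r v) rv0; rewrite (m_rinv M v0 rv0) G0.
have [pab1 pab2] := scf a b Dab.
have -> : 1 - p b a = p a b by lra.
move=> <-; rewrite mulrC divfK // gt_eqF //.
Qed.
Arguments m_K3 {R X D p f u g r a b v}.

Lemma m_K4 (R : realType) (X : finType) (D : X -> X -> Prop) (p : X -> X -> R) (f : X -> X -> R -> R) (u : X -> R) (g : X -> X -> R -> R) (r : R -> R) (a b : X) (v1 v2 : R) :
  Model D p f u g r -> D a b -> 0 < v1 -> v1 < v2 -> 0 < r v1 -> 0 < r v2 ->
  Defs.cdf (g a b) v1 < Defs.cdf (g a b) v2.
Proof.
move=> M Dab v10 v12 rv1 rv2.
have [dom [scf fd] rum [_ _ dec _ _] [sym rat]] := M.
have v20 : 0 < v2 by exact: lt_trans v12.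
have E1 := m_K3 M Dab v10 rv1.
have E2 := m_K3 M Dab v20 rv2.
have [pab1 _] := scf a b Dab.
have rlt := dec _ _ v10 v12 rv1 rv2.
have [Finc _] := F_props (fd a b Dab).
have Flt := Finc _ _ (ltW rv2) rlt.
have : p a b * cdf_pos (f a b) (r v2) < p a b * cdf_pos (f a b) (r v1).
  by rewrite ltr_pM2l.
rewrite -E1 -E2; lra.
Qed.
Arguments m_K4 {R X D p f u g r a b v1 v2}.

Lemma half_cdf (R : realType) (X : finType) (u : X -> R) (g : X -> X -> R -> R) (a b : X) :
  is_RUM u g -> is_symmetric u g -> a <> b -> Defs.cdf (g a b) (u a - u b) = 1 / 2.
Proof.
move=> rum sym ab.
have [dens _ _ _ _] := rum a b ab.
have := @sym_cdf R (g a b) (u a - u b) 0 dens (sym a b ab).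
rewrite subr0 addr0 => H; lra.
Qed.
Arguments half_cdf {R X u g a b}.

Lemma m_L1 (R : realType) (X : finType) (D : X -> X -> Prop) (p : X -> X -> R) (f : X -> X -> R -> R) (u : X -> R) (g : X -> X -> R -> R) (r : R -> R) (a b : X) :
  Model D p f u g r -> D a b -> p b a <= p a b ->
  u b <= u a /\ (u a = u b -> p a b <= p b a).
Proof.
move=> M Dab ple.
have [[_ [dneq dsym]] [scf fd] rum [_ _ dec cr0 _] [sym rat]] := M.
have ab := dneq a b Dab.
have [pab1 pab2] := scf a b Dab.
split; last first.
  move=> E; have := half_cdf rum sym ab; rewrite E subrr.
  have [G0 _] := rat a b Dab; rewrite G0 => H; lra.
rewrite leNgt; apply/negP => lt_ab.
have ba : b <> a by move=> E; apply: ab.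
have Dba := dsym a b Dab.
have [G0 _] := rat b a Dba.
have Gc := half_cdf rum sym ba.
have c0 : 0 < u b - u a by rewrite subr_gt0.
have [e e0 He] := near0P (cvgry_gt cr0 0).
set m := Num.min e (u b - u a).
have m0 : 0 < m by rewrite lt_min e0 c0.
have me : m <= e by rewrite ge_min lexx.
have mc : m <= u b - u a by rewrite ge_min lexx orbT.
have v10 : 0 < m / 3 by rewrite divr_gt0.
have v12 : m / 3 < m * 2 / 3 by rewrite ltr_pM2r ?invr_gt0 // ltr_pMr // ltr1n.
have rv1 : 0 < r (m / 3) by apply: He => //; lra.
have rv2 : 0 < r (m * 2 / 3) by apply: He; lra.
have [dens _ _ _ _] := rum b a ba.
have H1 := cdf_mono dens (ltW v10).
have H2 := m_K4 M Dba v10 v12 rv1 rv2.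
have H3 : m * 2 / 3 <= u b - u a by lra.
have H4 := cdf_mono dens H3.
lra.
Qed.
Arguments m_L1 {R X D p f u g r a b}.

Lemma m_L2 (R : realType) (X : finType) (D : X -> X -> Prop) (p : X -> X -> R) (f : X -> X -> R -> R) (u : X -> R) (g : X -> X -> R -> R) (r : R -> R) (a b : X) (s : R) :
  Model D p f u g r -> is_t D p f a b s ->
  0 < u a - u b /\ r (2 * (u a - u b)) = s.
Proof.
move=> M [Dab plt s0 Fs].
have [[_ [dneq dsym]] [scf fd] rum [_ rc dec _ _] [sym rat]] := M.
have ab := dneq a b Dab.
have [pab1 pab2] := scf a b Dab.
have [m_ge0 m_eq] := m_L1 M Dab (ltW plt).
have m0 : 0 < u a - u b.
  rewrite lt_neqAle subr_ge0 m_ge0 andbT; apply/eqP => E.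
  have : u a = u b by lra.
  by move/m_eq; rewrite leNgt plt.
split => //.
set m := u a - u b.
have m0p : 0 < m := m0.
have [w [w0 [rw0 rws]]] := m_surj M Dab s0.
have Kw := m_K3 M Dab w0 rw0.
rewrite rws Fs mulrC divfK ?gt_eqF // in Kw.
have [dens _ _ _ _] := rum a b ab.
have Sy := @sym_cdf R (g a b) m m dens (sym a b ab).
rewrite subrr in Sy.
have [G0 _] := rat a b Dab.
have Geq : Defs.cdf (g a b) w = Defs.cdf (g a b) (m + m) by lra.
have m2 : 2 * m = m + m by rewrite mulr2n mulrDl mul1r.
rewrite m2.
have [e e0 He] := contpos rc w0 rw0.
case: (ltgtP w (m + m)) => H; last by rewrite -H.
- set v := w + Num.min e (m + m - w) / 2.
  have mn0 : 0 < Num.min e (m + m - w) by rewrite lt_min e0 subr_gt0 H.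
  have mne : Num.min e (m + m - w) <= e by rewrite ge_min lexx.
  have mnc : Num.min e (m + m - w) <= m + m - w by rewrite ge_min lexx orbT.
  have wv : w < v by rewrite /v ltrDl divr_gt0.
  have rv : 0 < r v by apply: He; rewrite /v opprD addrA subrr sub0r normrN gtr0_norm ?divr_gt0 //; lra.
  have H1 := m_K4 M Dab w0 wv rw0 rv.
  have H2 : v <= m + m by rewrite /v; lra.
  have H3 := cdf_mono dens H2.
  lra.
- set v := w - Num.min e (w - (m + m)) / 2.
  have mn0 : 0 < Num.min e (w - (m + m)) by rewrite lt_min e0 subr_gt0 H.
  have mne : Num.min e (w - (m + m)) <= e by rewrite ge_min lexx.
  have mnc : Num.min e (w - (m + m)) <= w - (m + m) by rewrite ge_min lexx orbT.
  have vw : v < w by rewrite /v ltrBlDr ltrDl divr_gt0.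
  have v0 : 0 < v by rewrite /v; lra.
  have rv : 0 < r v by apply: He; rewrite /v opprB addrC subrK gtr0_norm ?divr_gt0 //; lra.
  have H1 := m_K4 M Dab v0 vw rv rw0.
  have H2 : m + m <= v by rewrite /v; lra.
  have H3 := cdf_mono dens H2.
  lra.
Qed.
Arguments m_L2 {R X D p f u g r a b s}.

Lemma m_Rsrt (R : realType) (X : finType) (D : X -> X -> Prop) (p : X -> X -> R) (f : X -> X -> R -> R) (u : X -> R) (g : X -> X -> R -> R) (r : R -> R) (a b : X) :
  Model D p f u g r -> Rsrt D p f a b ->
  u b <= u a /\ (u a = u b -> Rsrt D p f b a).
Proof.
move=> M [ab [nD [z Hz]]].
have [[_ [dneq dsym]] _ _ [_ _ dec _ _] _] := M.
have ba : b <> a by move=> E; apply: ab.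
have nDba : ~ D b a by move=> /dsym.
case: Hz => [[s1 [s2 [t1 t2 le12]]]|[s1 [s2 [t1 t2 le21]]]].
- have [m1 r1] := m_L2 M t1.
  have [m2 r2] := m_L2 M t2.
  have [_ _ s10 _] := t1.
  have [_ _ s20 _] := t2.
  split.
    rewrite leNgt; apply/negP => H.
    have A1 : 0 < 2 * (u a - u z) by rewrite mulr_gt0.
    have A2 : 2 * (u a - u z) < 2 * (u b - u z) by rewrite ltr_pM2l // ltrD2r.
    have := dec _ _ A1 A2; rewrite r1 r2 => /(_ s10 s20) H'.
    by move: le12; rewrite leNgt H'.
  move=> E; split => //; split => //; exists z; left; exists s2, s1; split => //.
  by rewrite -r1 -r2 E.
- have [m1 r1] := m_L2 M t1.
  have [m2 r2] := m_L2 M t2.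
  have [_ _ s10 _] := t1.
  have [_ _ s20 _] := t2.
  split.
    rewrite leNgt; apply/negP => H.
    have A1 : 0 < 2 * (u z - u b) by rewrite mulr_gt0.
    have A2 : 2 * (u z - u b) < 2 * (u z - u a) by rewrite ltr_pM2l // ltrD2l ltrN2.
    have := dec _ _ A1 A2; rewrite r1 r2 => /(_ s20 s10) H'.
    by move: le21; rewrite leNgt H'.
  move=> E; split => //; split => //; exists z; right; exists s2, s1; split => //.
  by rewrite -r1 -r2 E.
Qed.
Arguments m_Rsrt {R X D p f u g r a b}.

Lemma m_step (R : realType) (X : finType) (D : X -> X -> Prop) (p : X -> X -> R) (f : X -> X -> R -> R) (u : X -> R) (g : X -> X -> R -> R) (r : R -> R) (a b : X) :
  Model D p f u g r -> RsRsrt D p f a b ->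
  u b <= u a /\ (u a = u b -> RsRsrt D p f b a).
Proof.
move=> M; have [[_ [_ dsym]] _ _ _ _] := M.
case => [[E|[Dab ple]]|H].
- by subst b; split => // _; left; left.
- have [H1 H2] := m_L1 M Dab ple.
  by split => // E; left; right; split; [exact: dsym | exact: H2].
- have [H1 H2] := m_Rsrt M H.
  by split => // E; right; exact: H2.
Qed.
Arguments m_step {R X D p f u g r a b}.

Lemma m_TR (R : realType) (X : finType) (D : X -> X -> Prop) (p : X -> X -> R) (f : X -> X -> R -> R) (u : X -> R) (g : X -> X -> R -> R) (r : R -> R) (a b : X) :
  Model D p f u g r -> TR (RsRsrt D p f) a b ->
  u b <= u a /\ (u a = u b -> TR (RsRsrt D p f) b a).
Proof.
move=> M; rewrite /TR; elim => [x y H | x y z _ [IH1 IH2] _ [IH3 IH4]].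
- have [H1 H2] := m_step M H.
  by split => // E; apply: t_step; exact: H2.
- split; first exact: le_trans IH3 IH1.
  move=> E.
  have E1 : u x = u y by apply/eqP; rewrite eq_le IH1 E IH3.
  have E2 : u y = u z by rewrite -E1.
  exact: t_trans (IH4 E2) (IH2 E1).
Qed.
Arguments m_TR {R X D p f u g r a b}.

Theorem corollary4 (R : realType) (X : finType) (D : X -> X -> Prop)
  (p : X -> X -> R) (f : X -> X -> R -> R) (x y : X) :
  is_domain D -> is_SCF_RT D p f -> sym_rationalizable D p f ->
  (TR (RsRsrt D p f) x y ->
     forall (u : X -> R) (g : X -> X -> R -> R) (r : R -> R),
       is_RUM_CF u g r -> is_symmetric u g -> rationalizes u g r D p f ->
       u y <= u x) /\
  (TPR (RsRsrt D p f) x y ->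
     forall (u : X -> R) (g : X -> X -> R -> R) (r : R -> R),
       is_RUM_CF u g r -> is_symmetric u g -> rationalizes u g r D p f ->
       u y < u x).
Proof.
move=> dom scf _; split.
- move=> H u g r [rum cf] sym rat.
  have M : Model D p f u g r by split.
  by have [] := m_TR M H.
- move=> [H nH] u g r [rum cf] sym rat.
  have M : Model D p f u g r by split.
  have [H1 H2] := m_TR M H.
  rewrite lt_neqAle H1 andbT; apply/eqP => E; apply: nH; apply: H2; by rewrite E.
Qed.
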